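(* Let $q\geq2$, $\mathsf{BD}_{2q}=\langle b,c\mid (bc)^2=b^2=c^q\rangle$ (order $4q$), and for $1\le t\le q-1$ let $\rho_t\colon\mathsf{BD}_{2q}\to\mathrm{GL}(2,\mathbb{C})$ be $\rho_t(b)=\begin{pmatrix}0&1\\(-1)^t&0\end{pmatrix}$, $\rho_t(c)=\begin{pmatrix}\zeta_{2q}^t&0\\0&\zeta_{2q}^{-t}\end{pmatrix}$, $\zeta_{2q}=e^{\pi i/q}$. Let $M=\mathbb{S}^3/\rho_1(\mathsf{BD}_{2q})$. Then $$\tilde\xi_{\rho_t}(D)=\frac{1}{4q}\left(t^2-2qt-2q\right).$$
   Context: For a spherical $3$-manifold $M=\mathbb{S}^3/\varsigma(\Gamma)$, with $\varsigma\colon\Gamma\to\mathrm{U}(2)$ faithful and fixed-point free, and a representation $\rho\colon\Gamma\to\mathrm{U}(k)$, $\tilde\xi_\rho(D)=\xi(D_\rho)-k\,\xi(D)$ is the reduced Atiyah–Patodi–Singer $\xi$-invariant of the Dirac operator $D$ of $M$ twisted by the flat bundle of $\rho$ (here $\xi=(h+\eta)/2$, $h$ the dimension of the kernel, $\eta$ the eta-invariant). It is known to satisfy $\tilde\xi_\rho(D)=\frac{1}{|\Gamma|}\sum_{g\neq1}(\mathrm{Tr}\rho(g)-k)\,\mathrm{def}(\varsigma(g))$, with $\mathrm{def}(A)=\frac{\sqrt{\det A}}{1-\mathrm{Tr}A+\det A}$; for $\varsigma=\rho_1$ (values in $\mathrm{SU}(2)$) the square root is $1$. *)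

(* Defs.v *)
From mathcomp Require Import all_boot all_order all_algebra all_fingroup all_solvable all_field all_character.
Set Implicit Arguments. Unset Strict Implicit. Unset Printing Implicit Defensive.
Import GRing.Theory Num.Theory.
Local Open Scope ring_scope.

(* zeta_{2q} = e^{pi i/q}: q.-root (-1) is the q-th root of -1 of minimal
   nonnegative argument, i.e. exp(pi i / q). *)
Definition zeta2q (q : nat) : algC := q.-root (-1).

Definition BDb (t : nat) : 'M[algC]_2 :=
  \matrix_(i < 2, j < 2)
    if (i == 0 :> nat) && (j == 1 :> nat) then 1
    else if (i == 1 :> nat) && (j == 0 :> nat) then (-1) ^+ t else 0.

Definition BDc (z : algC) (t : nat) : 'M[algC]_2 :=
  \matrix_(i < 2, j < 2)
    if i == j then (if (i == 0 :> nat) then z ^+ t else (z ^+ t)^-1) else 0.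

Definition defect (A : 'M[algC]_2) : algC :=
  sqrtC (\det A) / (1 - \tr A + \det A).

(* reduced xi-invariant via the equivariant formula of the context:
   (1/|G|) sum_{g <> 1} (Tr rho(g) - k) def(vs(g)) *)
Definition xi_tilde (gT : finGroupType) (G : {set gT}) (k : nat)
  (vs : gT -> 'M[algC]_2) (rho : gT -> 'M[algC]_k) : algC :=
  (#|G|%:R)^-1 * \sum_(g in G | g != 1%g) (\tr (rho g) - k%:R) * defect (vs g).

(* Main.v *)
Require Import Defs.
From mathcomp Require Import all_boot all_order all_algebra all_fingroup all_solvable all_field all_character.
From mathcomp Require Import ring.
From mathcomp Require Import lra zify.
Import Order.TTheory GRing.Theory Num.Theory.
Local Open Scope ring_scope.

Lemma tr2 (A : 'M[algC]_2) : \tr A = A 0 0 + A 1 1.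
Proof.
rewrite /mxtrace !big_ord_recr big_ord0 /= add0r.
by congr (A _ _ + A _ _); apply: val_inj.
Qed.

Lemma det2 (A : 'M[algC]_2) : \det A = A 0 0 * A 1 1 - A 0 1 * A 1 0.
Proof.
rewrite (expand_det_row _ 0) !big_ord_recr big_ord0 /= add0r.
rewrite /cofactor !det_mx11 !mxE /=.
have e1 : (widen_ord (leqnSn 1) ord_max) = 0 :> 'I_2 by apply/val_inj.
have e2 : (lift 0 0 : 'I_2) = 1 by apply/val_inj.
have e3 : (ord_max : 'I_2) = 1 by apply/val_inj.
have e4 : (lift 1 0 : 'I_2) = 0 by apply/val_inj.
rewrite e1 e2 e3 e4 expr0 expr1; ring.
Qed.

Lemma ord2 (i : 'I_2) : i = 0 \/ i = 1.
Proof. by case: i => [[|[|i]] Hi]; [left|right|]; try apply/val_inj. Qed.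

Lemma BDc_mul z s s' : z != 0 -> BDc z s *m BDc z s' = BDc z (s + s').
Proof.
move=> z0; apply/matrixP => i j; rewrite !mxE !big_ord_recr big_ord0 /= add0r !mxE.
by case: (ord2 i) => ->; case: (ord2 j) => -> /=; rewrite ?mulr0 ?mul0r ?addr0 ?add0r // exprD // invfM.
Qed.

Lemma BDc0 z : BDc z 0 = 1.
Proof.
apply/matrixP => i j; rewrite !mxE.
by case: (ord2 i) => ->; case: (ord2 j) => -> /=; rewrite ?invr1.
Qed.

Lemma BDcX z s k : z != 0 -> BDc z s ^+ k = BDc z (s * k).
Proof.
move=> z0; elim: k => [|k IH]; first by rewrite expr0 muln0 BDc0.
by rewrite exprS IH -mulmxE BDc_mul // mulnS.
Qed.

Lemma trBDc z s : \tr (BDc z s) = z ^+ s + (z ^+ s)^-1.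
Proof. by rewrite tr2 !mxE. Qed.

Lemma detBDc z s : z != 0 -> \det (BDc z s) = 1.
Proof. by move=> z0; rewrite det2 !mxE /= mulr0 subr0 divff // expf_neq0. Qed.

Lemma trBDbc z t s : \tr (BDb t *m BDc z s) = 0.
Proof. rewrite tr2 !mxE !big_ord_recr !big_ord0 /= !mxE /=; ring. Qed.

Lemma detBDb1 : \det (BDb 1) = 1.
Proof. by rewrite det2 !mxE /= mulr0 sub0r expr1 mulrN1 opprK. Qed.
Lemma geo0 (c : algC) N : c ^+ N = 1 -> c != 1 -> \sum_(j < N) c ^+ j = 0.
Proof.
move=> cN c1; have := subrX1 c N; rewrite cN subrr => /esym/eqP.
by rewrite mulf_eq0 subr_eq0 (negbTE c1) /= => /eqP.
Qed.

Lemma geo (c : algC) N : c ^+ N = 1 ->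
  \sum_(j < N) c ^+ j = if c == 1 then N%:R else 0.
Proof.
move=> cN; case: eqP => [->|/eqP c1]; last exact: geo0.
by under eq_bigr do rewrite expr1n; rewrite sumr_const card_ord.
Qed.

Definition aa (y : algC) := (1 - y) * (1 - y^-1).

Lemma unit_conj (y : algC) : `|y| = 1 -> y^-1 = y^*.
Proof. by move=> ny; rewrite invC_norm ny expr1n invr1 mul1r. Qed.

Lemma aa_norm (y : algC) : `|y| = 1 -> aa y = `|1 - y| ^+ 2.
Proof.
move=> ny; rewrite /aa normCK unit_conj // rmorphB /= conjC1 //.
Qed.

Lemma aa_Re (y : algC) : `|y| = 1 -> aa y = 2 - 2 * 'Re y.
Proof.
move=> ny; rewrite /aa ReE unit_conj //.
have : y * y^* = 1 by rewrite -normCK ny expr1n.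
move=> h; rewrite mulrBr !mulrBl mul1r mulr1 h; by field.
Qed.

Lemma norm_of_q (y : algC) q : (0 < q)%N -> y ^+ q = -1 -> `|y| = 1.
Proof.
move=> q0 yq; apply/eqP; rewrite -(pexpr_eq1 q0) ?normr_ge0 //.
by rewrite -normrX yq normrN normr1.
Qed.

Lemma Re_le_zeta q (y : algC) : (0 < q)%N -> y ^+ q = -1 -> 'Re y <= 'Re (zeta2q q).
Proof.
move=> q0 yq; have [Ip|In] := real_ge0P (Creal_Im y).
  exact: rootC_Re_max.
rewrite -Re_conj; apply: rootC_Re_max => //.
  by rewrite -rmorphXn /= yq rmorphN1.
by rewrite Im_conj oppr_ge0 ltW.
Qed.

Lemma neg1_neq1 : (-1 : algC) != 1.
Proof. by rewrite -subr_eq0 -opprD oppr_eq0 (_ : 1 + 1 = 2%:R) // pnatr_eq0. Qed.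

Lemma no_small_root q n m : (0 < n)%N -> (1 < m)%N -> q = (m * n)%N ->
  zeta2q q ^+ n = -1 -> False.
Proof.
move=> n0 m1 qmn zn.
have m0 : (0 < m)%N by apply: ltnW.
have q0 : (0 < q)%N by rewrite qmn muln_gt0 m0.
set z := zeta2q q in zn.
have zq : z ^+ q = -1 by rewrite /z /zeta2q rootCK.
have z1 : z != 1 by apply/eqP => e; move: zn; rewrite e expr1n => /eqP; rewrite eq_sym (negbTE neg1_neq1).
have z0 : z != 0 by apply/eqP => e; move: zq; rewrite e expr0n gtn_eqF //= => /eqP; rewrite eq_sym oppr_eq0 oner_eq0.
have [w wprim] := C_prim_root_exists m0.
have wm : w ^+ m = 1 := prim_expr_order wprim.
have w0 : w != 0 by apply/eqP => e; move: wm; rewrite e expr0n gtn_eqF //= => /eqP; rewrite eq_sym oner_eq0.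
set y0 := m.-root z.
have y0m : y0 ^+ m = z by rewrite /y0 rootCK.
have y00 : y0 != 0 by apply/eqP => e; move: y0m; rewrite e expr0n gtn_eqF //= => /eqP; rewrite eq_sym (negbTE z0).
pose y := fun j : 'I_m => y0 * w ^+ j.
have ym j : y j ^+ m = z by rewrite /y exprMn -exprM mulnC exprM wm expr1n mulr1.
have yq j : y j ^+ q = -1 by rewrite qmn exprM ym.
have ny j : `|y j| = 1 := @norm_of_q _ _ q0 (yq j).
have nz : `|z| = 1 := @norm_of_q _ _ q0 zq.
have az : 0 < aa z by rewrite aa_norm // exprn_gt0 // normr_gt0 subr_eq0 eq_sym.
have ay j : 0 < aa (y j).
  rewrite aa_norm // exprn_gt0 // normr_gt0 subr_eq0 eq_sym; apply/eqP => e.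
  by move: (yq j); rewrite e expr1n => /eqP; rewrite eq_sym (negbTE neg1_neq1).
have le j : aa z <= aa (y j).
  rewrite !aa_Re // lerD2l lerN2 ler_pM2l ?ltr0n //; exact: Re_le_zeta.
pose S (x : algC) := \sum_(i < m) x ^+ i.
have S1 x : 1 - x ^+ m = (1 - x) * S x.
  by rewrite -opprB subrX1 -mulNr opprB.
pose P j := S (y j) * S ((y j)^-1).
have eP j : aa z = aa (y j) * P j.
  rewrite /aa /P; have -> : z^-1 = (y j)^-1 ^+ m by rewrite exprVn ym.
  rewrite -{1}(ym j) !S1; ring.
have Ple j : P j <= 1.
  have -> : P j = aa z / aa (y j) by rewrite (eP j) [aa (y j) * _]mulrC mulfK // gt_eqF.
  by rewrite ler_pdivrMr // mul1r.
have sumP : \sum_j P j = (m * m)%:R.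
  have term i l (j : 'I_m) : y j ^+ i * (y j)^-1 ^+ l
      = (y0 ^+ i * y0^-1 ^+ l) * (w ^+ i * w^-1 ^+ l) ^+ j.
    rewrite /y invfM !exprMn -exprVn -!exprM.
    rewrite [(j * i)%N]mulnC [(j * l)%N]mulnC; ring.
  have c_m i l : (w ^+ i * w^-1 ^+ l) ^+ m = 1.
    by rewrite exprMn -!exprM !(mulnC _ m) !exprM wm exprVn wm invr1 !expr1n mulr1.
  have c1 (i l : 'I_m) : (w ^+ i * w^-1 ^+ l == 1) = (i == l).
    rewrite exprVn; apply/eqP/eqP => [h | ->].
      have : w ^+ i = w ^+ l by rewrite -(divfK (expf_neq0 l w0) (w ^+ i)) h mul1r.
      move/eqP; rewrite (eq_prim_root_expr wprim) !modn_small // => /eqP; exact: val_inj.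
    by rewrite divff // expf_neq0.
  have inner (i l : 'I_m) : \sum_(j < m) y j ^+ i * (y j)^-1 ^+ l = if i == l then m%:R else 0.
    under eq_bigr do rewrite term.
    rewrite -mulr_sumr (@geo _ _ (c_m i l)) c1; case: eqP => [->|_]; last by rewrite mulr0.
    by rewrite exprVn divff ?expf_neq0 // mul1r.
  rewrite /P /S.
  transitivity (\sum_(j < m) \sum_(i < m) \sum_(l < m) y j ^+ i * (y j)^-1 ^+ l).
    apply: eq_bigr => j _; rewrite mulr_suml; apply: eq_bigr => i _; by rewrite mulr_sumr.
  rewrite exchange_big; under eq_bigr do rewrite exchange_big.
  under eq_bigr do under eq_bigr do rewrite inner.
  transitivity (\sum_(i < m) (m%:R : algC)).
    apply: eq_bigr => i _; rewrite (bigD1 i) //= eqxx big1 ?addr0 // => l /negbTE.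
    by rewrite eq_sym => ->.
  by rewrite sumr_const card_ord natrM mulr_natr.
have : \sum_j P j <= \sum_(j < m) 1 by apply: ler_sum => j _; exact: Ple.
rewrite sumP sumr_const card_ord ler_nat.
nia.
Qed.

Lemma zeta_q q : (0 < q)%N -> zeta2q q ^+ q = -1.
Proof. by move=> q0; rewrite /zeta2q rootCK. Qed.

Lemma zeta_prim q : (0 < q)%N -> (2 * q).-primitive_root (zeta2q q).
Proof.
move=> q0; set z := zeta2q q.
have zq : z ^+ q = -1 := @zeta_q q q0.
have z2q : z ^+ (2 * q) = 1 by rewrite mulnC exprM zq sqrrN expr1n.
have q2 : (0 < 2 * q)%N by rewrite muln_gt0 q0.
have [d dprim ddvd] := prim_order_exists q2 z2q.
have d0 : (0 < d)%N := prim_order_gt0 dprim.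
have ndq : ~~ (d %| q)%N by rewrite (prim_order_dvd dprim) zq; exact: neg1_neq1.
case/dvdnP: ddvd => r hr.
have odr : odd r.
  apply: contraR ndq => er; have := odd_double_half r; rewrite (negbTE er) add0n => e.
  apply/dvdnP; exists r./2; rewrite -mul2n in e; nia.
have odd_d : ~~ odd d.
  have : odd (2 * q) = false by rewrite oddM.
  by rewrite hr oddM odr /= => ->.
have := odd_double_half d; rewrite (negbTE odd_d) add0n => ed.
set n := d./2 in ed.
have qrn : q = (r * n)%N by rewrite -mul2n in ed; nia.
have n0 : (0 < n)%N by nia.
case: (ltngtP r 1) => [r0|r1|r1].
- by move: qrn; rewrite ltnS leqn0 in r0; rewrite (eqP r0); nia.
- have zn : z ^+ n = -1.
    have : (z ^+ n) ^+ 2 == 1 by rewrite -exprM mulnC mul2n ed (prim_expr_order dprim).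
    rewrite sqrf_eq1 => /orP [h|/eqP //].
    have : (d %| n)%N by rewrite (prim_order_dvd dprim).
    move/(dvdn_leq n0); nia.
  by case: (@no_small_root q n r n0 r1 qrn zn).
- have -> : (2 * q)%N = d by nia.
  exact: dprim.
Qed.

Lemma key (w : algC) t N : w != 0 -> w != 1 -> w ^+ N = 1 -> (t <= N)%N ->
  (w ^+ t + (w ^+ t)^-1 - 2%:R) * (1 / (1 - (w + w^-1) + 1))
  = - (\sum_(i < t) w ^+ i) ^+ 2 * w ^+ (N + 1 - t).
Proof.
move=> w0 w1 wN tN; set S := \sum_(i < t) w ^+ i.
have wt0 : w ^+ t != 0 by apply: expf_neq0.
have e : w ^+ (N + 1 - t) = w / w ^+ t.
  apply: (mulIf wt0); rewrite divfK // -exprD subnK; last by rewrite addn1 (leq_trans tN).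
  by rewrite exprD wN mul1r expr1.
have hS : w ^+ t = 1 + (w - 1) * S by rewrite -subrX1 addrC subrK.
rewrite e; move: wt0; rewrite hS => wt0.
have w10 : w - 1 != 0 by rewrite subr_eq0.
field.
have -> : w - (w * w + 1) + w = - ((w - 1) ^+ 2) by ring.
by rewrite wt0 w0 oppr_eq0 sqrf_eq0 w10.
Qed.

Lemma dvd_window N e : (0 < e)%N -> (e < 2 * N)%N -> (N %| e)%N = (e == N).
Proof.
move=> e0 eN; apply/idP/eqP => [/dvdnP [c ec]|->]; last exact: dvdnn.
have c1 : c = 1%N by nia.
by rewrite ec c1 mul1n.
Qed.

Lemma sumG q t : (2 <= q)%N -> (1 <= t)%N -> (t <= q - 1)%N ->
  \sum_(k < 2 * q) (- (\sum_(i < t) (zeta2q q ^+ k) ^+ i) ^+ 2 * (zeta2q q ^+ k) ^+ (2 * q + 1 - t))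
  = - (t * (2 * q))%:R.
Proof.
move=> hq ht1 ht2; set z := zeta2q q; set N := (2 * q)%N; set E := (N + 1 - t)%N.
have zprim : N.-primitive_root z by apply: zeta_prim; lia.
have inner (i j : 'I_t) : \sum_(k < N) (z ^+ (i + j + E)) ^+ k
    = if (i + j + 1 == t)%N then N%:R else 0.
  rewrite geo; last by rewrite exprAC (prim_expr_order zprim) expr1n.
  rewrite -(prim_order_dvd zprim) dvd_window; last 2 first.
  - rewrite /E; lia.
  - rewrite /E /N; have := ltn_ord i; have := ltn_ord j; lia.
  have -> : (i + j + E == N)%N = (i + j + 1 == t)%N.
    by apply/eqP/eqP; rewrite /E /N; have := ltn_ord i; have := ltn_ord j; lia.
  by [].
transitivity (\sum_(k < N) - \sum_(i < t) \sum_(j < t) (z ^+ (i + j + E)) ^+ k).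
  apply: eq_bigr => k _.
  rewrite expr2 mulr_suml mulNr mulr_suml; congr (- _); apply: eq_bigr => i _.
  rewrite mulr_sumr mulr_suml; apply: eq_bigr => j _.
  rewrite -!exprD -!exprM; congr (_ ^+ _); lia.
rewrite sumrN exchange_big; under eq_bigr do rewrite exchange_big.
under eq_bigr do under eq_bigr do rewrite inner.
congr (- _).
transitivity (\sum_(i < t) (N%:R : algC)).
  apply: eq_bigr => i _.
  have jlt : (t - 1 - i < t)%N by have := ltn_ord i; lia.
  rewrite (bigD1 (Ordinal jlt)) //= big1 ?addr0.
    by have -> : (i + (t - 1 - i) + 1 == t)%N by apply/eqP; have := ltn_ord i; lia.
  move=> j /eqP hj; case: eqP => // e; case: hj; apply: val_inj => /=; lia.
by rewrite sumr_const card_ord natrM mulrC mulr_natr.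
Qed.
Section Grp.
Variables (gT : finGroupType) (b c : gT) (q : nat).
Hypotheses (hrel1 : ((b * c) ^+ 2 = b ^+ 2)%g) (hrel2 : (b ^+ 2 = c ^+ q)%g).
Local Open Scope group_scope.

Lemma cb_rel : c * b = b * c^-1.
Proof.
have h2 : (b * c) * (b * c) = b * b by move: hrel1; rewrite !expgS !expg0 !mulg1.
have : b * (c * b * c) = b * b by rewrite -h2 !mulgA.
move/mulgI => h; by rewrite -[in RHS]h mulgK.
Qed.

Lemma cib i : c ^+ i * b = b * (c^-1) ^+ i.
Proof.
elim: i => [|i IH]; first by rewrite !expg0 mul1g mulg1.
by rewrite expgS -mulgA IH mulgA cb_rel -mulgA -expgS.
Qed.

Lemma c2q : c ^+ (2 * q) = 1.
Proof.
have h := cib q; rewrite -hrel2 expgVn -hrel2 in h.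
have e : b ^+ 2 * b = b * b ^+ 2 by rewrite -expgS -expgSr.
rewrite e in h; move/mulgI: h => h.
by rewrite mul2n -addnn expgD -hrel2 {1}h mulVg.
Qed.

Definition fbc (p : bool * 'I_(2 * q)) := (if p.1 then b else 1) * c ^+ p.2.

Hypothesis q0 : (0 < q)%N.

Lemma c_inv : c^-1 = c ^+ (2 * q).-1.
Proof.
apply: (mulgI c); rewrite mulgV -expgS prednK ?c2q //.
by rewrite muln_gt0 q0.
Qed.

Lemma inS e j : (if e then b else 1) * c ^+ j \in fbc @: setT.
Proof.
have N0 : (0 < 2 * q)%N by rewrite muln_gt0 q0.
apply/imsetP; exists (e, Ordinal (ltn_pmod j N0)); first by rewrite inE.
by rewrite /fbc /= expg_mod // c2q.
Qed.

Lemma S_group : group_set (fbc @: setT).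
Proof.
apply/group_setP; split; first by have := inS false 0; rewrite mul1g expg0.
move=> x y /imsetP[[e1 k1] _ ->] /imsetP[[e2 k2] _ ->]; rewrite /fbc /=.
case: e2; last by rewrite mul1g -mulgA -expgD; exact: inS.
rewrite mulgA -(mulgA _ (c ^+ k1)) cib c_inv -expgM mulgA.
case: e1; last by rewrite mul1g -mulgA -expgD; exact: (inS true).
have -> : b * b = c ^+ q by rewrite -hrel2 expgS expg1.
by rewrite -!expgD -(mul1g (c ^+ _)); exact: (inS false).
Qed.

Variable G : {group gT}.
Hypotheses (hgen : G :=: <<[set b; c]>>) (hord : #|G| = (4 * q)%N).

Lemma G_eq : (G : {set gT}) = fbc @: setT.
Proof.
have bG : b \in G by rewrite hgen mem_gen // !inE eqxx.
have cG : c \in G by rewrite hgen mem_gen // !inE eqxx orbT.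
apply/eqP; rewrite eqEsubset; apply/andP; split.
  rewrite hgen (gen_subG _ (Group S_group)); apply/subsetP => x; rewrite !inE.
  case/orP => /eqP ->; rewrite /=.
    by have := inS true 1; rewrite expg1 => /(_) h; rewrite -[b]mulg1 -(expg0 c) (inS true).
  by rewrite -[c]mul1g -(expg1 c) (inS false).
apply/subsetP => x /imsetP[[e k] _ ->]; rewrite /fbc /=.
by apply: groupM; [case: e | apply: groupX].
Qed.

Lemma fbc_inj : injective fbc.
Proof.
move=> x y; apply/(imset_injP (f:=fbc) (D:=setT)) => //.
rewrite -G_eq hord cardsT card_prod card_bool card_ord.
by rewrite mulnA.
Qed.
End Grp.
Arguments fbc {gT} b c {q} p.

Lemma rep_cX (gT : finGroupType) (G : {group gT}) (r : gT -> 'M[algC]_2) c z s :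
  mx_repr G r -> c \in G -> z != 0 -> r c = BDc z s ->
  forall k, r (c ^+ k)%g = BDc z (s * k).
Proof.
move=> [r1 rM] cG z0 rc; elim => [|k IH]; first by rewrite expg0 r1 muln0 BDc0.
by rewrite expgS rM ?groupX // rc IH BDc_mul // mulnS.
Qed.

Lemma split_sum q (F : bool * 'I_(2 * q) -> algC) :
  \sum_p F p = \sum_(k < 2 * q) F (true, k) + \sum_(k < 2 * q) F (false, k).
Proof.
transitivity (\sum_(e : bool) \sum_(k < 2 * q) F (e, k)); last by rewrite big_bool.
by rewrite pair_bigA; apply: eq_bigr => -[e k].
Qed.

Theorem proposition5p7 (q : nat) (hq : (2 <= q)%N)
  (gT : finGroupType) (G : {group gT}) (b c : gT)
  (hgen : G :=: <<[set b; c]>>%g)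
  (hrel1 : ((b * c) ^+ 2 = b ^+ 2)%g) (hrel2 : (b ^+ 2 = c ^+ q)%g)
  (hord : #|G| = (4 * q)%N)
  (rho1 : gT -> 'M[algC]_2) (hrho1 : mx_repr G rho1)
  (hrho1b : rho1 b = BDb 1) (hrho1c : rho1 c = BDc (zeta2q q) 1)
  (t : nat) (ht1 : (1 <= t)%N) (ht2 : (t <= q - 1)%N)
  (rhot : gT -> 'M[algC]_2) (hrhot : mx_repr G rhot)
  (hrhotb : rhot b = BDb t) (hrhotc : rhot c = BDc (zeta2q q) t) :
  xi_tilde G rho1 rhot
  = ((t%:R) ^+ 2 - 2 * q%:R * t%:R - 2 * q%:R) / (4 * q%:R).
Proof.
have q0 : (0 < q)%N by lia.
have N0 : (0 < 2 * q)%N by lia.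
set z := zeta2q q.
have zprim : (2 * q).-primitive_root z := @zeta_prim q q0.
have z0 : z != 0 by apply/eqP => e; move: (prim_expr_order zprim); rewrite e expr0n gtn_eqF //= => /eqP; rewrite eq_sym oner_eq0.
have bG : b \in G by rewrite hgen mem_gen // !inE eqxx.
have cG : c \in G by rewrite hgen mem_gen // !inE eqxx orbT.
have inj := @fbc_inj _ _ _ _ hrel1 hrel2 q0 _ hgen hord.
have r1c k : rho1 (c ^+ k)%g = BDc z (1 * k) := @rep_cX _ _ _ _ _ _ hrho1 cG z0 hrho1c k.
have rtc k : rhot (c ^+ k)%g = BDc z (t * k) := @rep_cX _ _ _ _ _ _ hrhot cG z0 hrhotc k.
rewrite /xi_tilde hord (@G_eq _ _ _ _ hrel1 hrel2 q0 _ hgen).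
rewrite big_imset_cond; last by move=> x y _ _; apply: inj.
rewrite (eq_bigl (fun p => fbc b c p != 1%g)); last by move=> p; rewrite inE.
rewrite big_mkcond split_sum.
set k0 := Ordinal N0.
have htrue : \sum_(k < 2 * q) (if fbc b c (true, k) != 1%g then
     (\tr (rhot (fbc b c (true, k))) - 2%:R) * defect (rho1 (fbc b c (true, k))) else 0)
     = - (2 * q)%:R.
  transitivity (\sum_(k < 2 * q) (-1 : algC)); last by rewrite sumrN sumr_const card_ord.
  apply: eq_bigr => k _.
  have ne : fbc b c (true, k) != 1%g.
    apply/eqP => e; have : fbc b c (true, k) = fbc b c (false, k0).
      by rewrite e /fbc /= mul1g expg0.
    by move/inj.
  rewrite ne /fbc /= (proj2 hrhot b (c ^+ k)%g bG (groupX k cG)).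
  rewrite (proj2 hrho1 b (c ^+ k)%g bG (groupX k cG)) hrhotb hrho1b rtc r1c.
  rewrite /defect det_mulmx detBDb1 detBDc // mul1r sqrtC1 !trBDbc.
  by rewrite subr0 sub0r (_ : (1 + 1 : algC) = 2) // mul1r mulNr divff // pnatr_eq0.
have hfalse : \sum_(k < 2 * q) (if fbc b c (false, k) != 1%g then
     (\tr (rhot (fbc b c (false, k))) - 2%:R) * defect (rho1 (fbc b c (false, k))) else 0)
     = - (t * (2 * q))%:R + t%:R ^+ 2.
  have e0 : fbc b c (false, k0) = 1%g by rewrite /fbc /= mul1g expg0.
  rewrite (bigD1 k0) //= e0 eqxx /= add0r.
  transitivity (\sum_(k < 2 * q | k != k0)
     (- (\sum_(i < t) (z ^+ k) ^+ i) ^+ 2 * (z ^+ k) ^+ (2 * q + 1 - t))).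
    apply: eq_bigr => k nk.
    have ne : fbc b c (false, k) != 1%g.
      apply/eqP => e; rewrite -e0 in e; move/inj: e => [ek].
      by move: nk; rewrite ek eqxx.
    have kpos : (0 < k)%N.
      rewrite lt0n; apply: contra nk => /eqP h; apply/eqP/val_inj => /=; exact: h.
    rewrite ne /fbc /= mul1g rtc r1c /defect detBDc // sqrtC1 !trBDc mul1n.
    rewrite [(t * k)%N]mulnC exprM; apply: key.
    - exact: expf_neq0.
    - rewrite -(prim_order_dvd zprim); apply/negP => /(dvdn_leq kpos).
      by rewrite leqNgt ltn_ord.
    - by rewrite exprAC (prim_expr_order zprim) expr1n.
    - lia.
  have := @sumG q t hq ht1 ht2; rewrite (bigD1 k0) //= expr0.
  under eq_bigr do rewrite expr1n.
  rewrite sumr_const card_ord expr1n mulr1 => /(canRL (addKr _)) ->.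
  by rewrite opprK addrC.
rewrite htrue hfalse !natrM.
have q0' : (q%:R : algC) != 0 by rewrite pnatr_eq0 -lt0n.
by field.
Qed.
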